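(* Assume all deadlines are positive integers. For $\bar d\in\mathcal D$, an integer $q$ with $2\le q\le\bar d$, and $i\in\{0,\dots,q-1\}$, let $\mathcal K(\bar d,i,q)=\{k\in\mathcal K:\bar d_k\le\bar d,\ i\,\bar d/q<t_k\le(i+1)\,\bar d/q\}$. Then for every feasible solution $(\rho_{kp})$ of $B(\mathcal K)$, the vector $\rho_k=\sum_{p\in\mathcal P}\rho_{kp}$ satisfies $$\sum_{i=1}^{q-1}\sum_{k\in\mathcal K(\bar d,i,q)} i\,\rho_k\le (q-1)\,|\mathcal P|.$$
   Context: Let $\mathcal O$ be a finite set of orders, each order $o\in\mathcal O$ having a deadline $\bar d_o>0$; let $\mathcal D=\{\bar d_o: o\in\mathcal O\}$ be the set of distinct deadlines and let $\mathcal P$ be a finite nonempty set of pickers. Let $\mathcal K$ be a finite set of routes; each route $k\in\mathcal K$ has a nonempty batch of orders $\mathcal O_k\subseteq\mathcal O$ and a duration $t_k>0$, and its deadline is $\bar d_k=\min_{o\in\mathcal O_k}\bar d_o$. Write $\mathcal K(o)=\{k\in\mathcal K: o\in\mathcal O_k\}$ and $\mathcal K(\bar d)=\{k\in\mathcal K:\bar d_k\le\bar d\}$. Formulation $B(\mathcal K)$: binary variables $\rho_{kp}\in\{0,1\}$ ($k\in\mathcal K,p\in\mathcal P$); minimize $\sum_{k\in\mathcal K}t_k\sum_{p\in\mathcal P}\rho_{kp}$ subject to $\sum_{k\in\mathcal K(o)}\sum_{p\in\mathcal P}\rho_{kp}\ge 1$ for all $o\in\mathcal O$, and $\sum_{k\in\mathcal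 K(\bar d)}t_k\rho_{kp}\le\bar d$ for all $\bar d\in\mathcal D$, $p\in\mathcal P$. *)

(* Defs.v *)
From HB Require Import structures.
From mathcomp Require Import all_boot all_order all_algebra.
Set Implicit Arguments. Unset Strict Implicit. Unset Printing Implicit Defensive.
Import Order.TTheory GRing.Theory Num.Theory.

(* Deadline of a route: min over its (nonempty) batch of order deadlines.
   The seed of the fold is the largest deadline, so for a nonempty batch
   this is exactly min_{o in O_k} dd o. *)
Definition route_deadline (O K : finType) (dd : O -> nat) (batch : K -> {set O})
  (k : K) : nat :=
  \big[minn/ (\max_(o : O) dd o)%N]_(o in batch k) dd o.

Definition in_deadlines (O : finType) (dd : O -> nat) (dbar : nat) : Prop :=
  exists o : O, dd o = dbar.

Definition feasible_B (R : realFieldType) (O K P : finType) (dd : O -> nat)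
  (batch : K -> {set O}) (t : K -> R) (rho : K -> P -> bool) : Prop :=
  (forall o : O, (1 <= \sum_(k : K | o \in batch k) \sum_(p : P) (rho k p : nat))%N)
  /\ (forall (dbar : nat) (p : P), in_deadlines dd dbar ->
       (\sum_(k : K | (route_deadline dd batch k <= dbar)%N)
           t k * (rho k p)%:R <= (dbar%:R : R))%R).

Definition rho_route (K P : finType) (rho : K -> P -> bool) (k : K) : nat :=
  \sum_(p : P) (rho k p : nat).

Definition in_Kdiq (R : realFieldType) (O K : finType) (dd : O -> nat)
  (batch : K -> {set O}) (t : K -> R) (dbar i q : nat) (k : K) : bool :=
  (route_deadline dd batch k <= dbar)%N &&
  ((i%:R * dbar%:R / q%:R < t k)%R && (t k <= i.+1%:R * dbar%:R / q%:R)%R).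

(* Main.v *)
Require Import Defs.
From mathcomp Require Import all_boot all_order all_algebra.
Import Order.TTheory GRing.Theory Num.Theory.
Set Implicit Arguments. Unset Strict Implicit.

Lemma sum_lt_fin (R : numDomainType) (I : finType) (P : pred I) (F G : I -> R) :
  (forall i, P i -> F i <= G i)%R -> (exists i, P i && (F i < G i)%R) ->
  (\sum_(i | P i) F i < \sum_(i | P i) G i)%R.
Proof.
move=> hle [i0 /andP [Pi0 lt0]].
rewrite (bigD1 i0) //= [X in (_ < X)%R](bigD1 i0) //=.
apply: ltr_leD => //; apply: ler_sum => i /andP [Pi _]; exact: hle.
Qed.

Section PerPicker.
Variables (R : realFieldType) (O K P : finType)
  (dd : O -> nat) (batch : K -> {set O}) (t : K -> R)
  (ht : forall k : K, (0 < t k)%R) (dbar q : nat) (hq : (2 <= q <= dbar)%N).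

Local Notation C i k := (in_Kdiq dd batch t dbar i q k).
Local Notation c := ((dbar%:R : R) / q%:R)%R.

Lemma c_ge0 : (0 <= c)%R.
Proof. by apply: divr_ge0; apply: ler0n. Qed.

Lemma C_lo i k : C i k -> (i%:R * c < t k)%R.
Proof. by rewrite /in_Kdiq mulrA => /and3P [_ ? _]. Qed.

Lemma C_uniq i j k : C i k -> C j k -> i = j.
Proof.
wlog lt_ij : i j / (i < j)%N.
  move=> W Ci Cj; case: (ltngtP i j) => h.
  - exact: W.
  - by apply/esym; apply: W.
  - by [].
move=> Ci Cj; exfalso.
move: Ci; rewrite /in_Kdiq => /and3P [_ _ hi].
have := C_lo Cj; rewrite ltNge => /negP; apply.
apply: (le_trans hi); rewrite -mulrA; apply: ler_wpM2r; first exact: c_ge0.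
by rewrite ler_nat.
Qed.

Lemma perk (k : K) (b : bool) :
  let g := (\sum_(1 <= i < q | C i k) i * b)%N in
  (g%:R * c <= t k * b%:R)%R /\ ((0 < g)%N -> (g%:R * c < t k * b%:R)%R).
Proof.
move=> g.
case: b @g => g; last first.
  have -> : g = 0%N by rewrite /g big1 // => i _; rewrite muln0.
  by rewrite mul0r mulr0; split.
have [/existsP [i0 /andP [i0in Ci0]] | none] :=
  boolP [exists i0 : 'I_q, (1 <= i0)%N && C i0 k] ; last first.
  have -> : g = 0%N.
    rewrite /g big_nat_cond big1 // => i /andP [/andP [h1 h2] Ci].
    by exfalso; move/negP: none; apply; apply/existsP; exists (Ordinal h2); rewrite h1.
  by rewrite mul0r mulr1; split => //; apply: ltW.
have -> : g = i0.
  rewrite /g big_mkcond /= (bigD1_seq (nat_of_ord i0)) /=.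
  - rewrite Ci0 muln1 big1 ?addn0 // => i ni.
    by case: ifP => // Ci; move/eqP: ni; case; exact: C_uniq Ci Ci0.
  - by rewrite mem_index_iota i0in ltn_ord.
  - exact: iota_uniq.
rewrite mulr1; have h := C_lo Ci0; split => //; exact: ltW.
Qed.

Lemma perp (rho : K -> P -> bool) (p : P)
  (hfeas : (\sum_(k : K | (route_deadline dd batch k <= dbar)%N)
           t k * (rho k p)%:R <= (dbar%:R : R))%R) :
  (\sum_(1 <= i < q) \sum_(k : K | C i k) i * rho k p <= q - 1)%N.
Proof.
rewrite (exchange_big_dep (fun k => route_deadline dd batch k <= dbar)%N) /=;
  last by move=> i k _ /andP [].
set N := (\sum_(k | _) _)%N.
have [->|Npos] := posnP N; first by [].
have q0 : (0 < q)%N by case/andP: hq => h _; apply: leq_trans h.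
suff : (N%:R * c < dbar%:R :> R)%R.
  have d0 : (0 < dbar)%N by case/andP: hq => h1 h2; apply: leq_trans h2; apply: leq_trans h1.
  rewrite mulrA ltr_pdivrMr ?ltr0n // -!natrM ltr_nat mulnC ltn_pmul2l //.
  by move=> h; rewrite subn1 -ltnS prednK.
apply: lt_le_trans hfeas.
rewrite /N natr_sum mulr_suml; apply: sum_lt_fin.
  by move=> k _; case: (perk k (rho k p)).
have : N != 0%N by rewrite -lt0n.
rewrite /N sum_nat_eq0 => /forallPn [k]; rewrite negb_imply => /andP [hk gk].
exists k; rewrite hk /=; apply: (perk k (rho k p)).2; by rewrite lt0n.
Qed.

End PerPicker.

Theorem proposition5 (R : realFieldType) (O K P : finType)
  (dd : O -> nat) (batch : K -> {set O}) (t : K -> R)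
  (hdd : forall o : O, (0 < dd o)%N)
  (hbatch : forall k : K, batch k != set0)
  (ht : forall k : K, (0 < t k)%R)
  (hP : (0 < #|P|)%N)
  (rho : K -> P -> bool)
  (hfeas : feasible_B dd batch t rho)
  (dbar q : nat) (hdbar : in_deadlines dd dbar)
  (hq : (2 <= q <= dbar)%N) :
  (\sum_(1 <= i < q) \sum_(k : K | in_Kdiq dd batch t dbar i q k)
      i * rho_route rho k <= (q - 1) * #|P|)%N.
Proof.
rewrite /rho_route.
under eq_bigr do under eq_bigr do rewrite big_distrr.
under eq_bigr do rewrite exchange_big.
rewrite exchange_big /= -sum1_card big_distrr /=.
apply: leq_sum => p _; rewrite muln1.
apply: (perp ht hq); exact: hfeas.2.
Qed.
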